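(* Let $B=(B,+,0)$ be a unitary magma and $(X,\varphi)$ a $B$-action, with $X$ regarded as a unitary magma via $x+x'=\varphi(x,0,x',0)$ and neutral element $0$. (1) Let $Z$ be a unitary magma and $u\colon X\to Z$, $v\colon B\to Z$ morphisms of unitary magmas. There is at most one morphism $w\colon X\rtimes_\varphi B\to Z$ with $w(x,0)=u(x)$ for all $x\in X$ and $w(0,b)=v(b)$ for all $b\in B$; if it exists, then $w(x,b)=u(x)+v(b)$. Furthermore, the map $w(x,b)=u(x)+v(b)$ is a morphism of unitary magmas from $X\rtimes_\varphi B$ to $Z$ if and only if $$u(\varphi(x,b,x',b'))+v(b+b')=(u(x)+v(b))+(u(x')+v(b'))$$ for all $(x,b),(x',b')\in X\rtimes_\varphi B$. (2) Let $Z$ be a unitary magma, $f\colon Z\to X$ a map with $f(0)=0$, and $g\colon Z\to B$ a morphism of unitary magmas. Then the assignment $z\mapsto(f(z),g(z))$ is a morphism of unitary magmas from $Z$ to $X\rtimes_\varphi B$ if and only if $f(z_1+z_2)=\varphi(f(z_1),g(z_1),f(z_2),g(z_2))$ for all $z_1,z_2\in Z$.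
   Context: A unitary magma is a set with a binary operation $+$ and an element $0$ with $b+0=b=0+b$ for all $b$; morphisms preserve $+$ and $0$. A $B$-action is a pair $(X,\varphi)$ with $X$ a set and $\varphi\colon X\times B\times X\times B\to X$ a map such that: (1) there is an element $0\in X$ with $\varphi(x,0,0,0)=x=\varphi(0,0,x,0)$ for all $x\in X$; (2) $\varphi(x,b,0,0)=\varphi(x,0,0,b)=\varphi(0,0,x,b)$ for all $x\in X,b\in B$; (3) $\varphi(0,b,0,b')=0$ for all $b,b'\in B$; (4) writing $\varphi_{00}(x,b)=\varphi(x,0,0,b)$, for all $x,x'\in X$, $b,b'\in B$: $\varphi(x,b,x',b')=\varphi_{00}\big(\varphi(\varphi_{00}(x,b),b,\varphi_{00}(x',b'),b'),\,b+b'\big)$. The semidirect product $X\rtimes_\varphi B$ is the set $\{(x,b)\in X\times B\mid\varphi(x,0,0,b)=x\}$ with operation $(x,b)+(x',b')=(\varphi(x,b,x',b'),b+b')$ and neutral element $(0,0)$ (it is a unitary magma). *)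

(* Defs.v *)
From Stdlib Require Import ProofIrrelevance.
Set Implicit Arguments.

Record umagma := UMagma {
  ucar :> Type;
  uop : ucar -> ucar -> ucar;
  uzero : ucar;
  uop0r : forall b, uop b uzero = b;
  uop0l : forall b, uop uzero b = b
}.
Arguments uop {u} _ _.
Arguments uzero {u}.

Definition is_morph (M N : umagma) (f : M -> N) : Prop :=
  f uzero = uzero /\ forall a b, f (uop a b) = uop (f a) (f b).
Arguments is_morph {M N} f.

Record action (B : umagma) := Action {
  acar : Type;
  azero : acar;
  aphi : acar -> B -> acar -> B -> acar;
  ax1l : forall x, aphi x uzero azero uzero = x;
  ax1r : forall x, aphi azero uzero x uzero = x;
  ax2a : forall x b, aphi x b azero uzero = aphi x uzero azero b;
  ax2b : forall x b, aphi x uzero azero b = aphi azero uzero x b;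
  ax3 : forall b b', aphi azero b azero b' = azero;
  ax4 : forall x b x' b',
    aphi x b x' b' =
    aphi (aphi (aphi x uzero azero b) b (aphi x' uzero azero b') b')
         uzero azero (uop b b')
}.

Section Constructions.
Variables (B : umagma) (A : action B).

Definition phi00 (x : acar A) (b : B) : acar A := aphi A x uzero (azero A) b.

Definition X_magma : umagma :=
  @UMagma (acar A) (fun x x' => aphi A x uzero x' uzero) (azero A)
    (ax1l A) (ax1r A).

Definition sdp_car := { p : acar A * B | phi00 (fst p) (snd p) = fst p }.

Lemma phi00_idem (P : acar A) (c : B) : phi00 (phi00 P c) c = phi00 P c.
Proof.
  unfold phi00. pose proof (ax4 A P uzero (azero A) c) as H.
  rewrite (ax1l A P) in H. rewrite (ax3 A uzero c) in H. rewrite (uop0l B c) in H.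
  rewrite <- H. reflexivity.
Qed.

Lemma sdp_op_closed (p q : sdp_car) :
  phi00 (aphi A (fst (proj1_sig p)) (snd (proj1_sig p))
                (fst (proj1_sig q)) (snd (proj1_sig q)))
        (uop (snd (proj1_sig p)) (snd (proj1_sig q)))
  = aphi A (fst (proj1_sig p)) (snd (proj1_sig p))
           (fst (proj1_sig q)) (snd (proj1_sig q)).
Proof.
  rewrite (ax4 A). apply phi00_idem.
Qed.

Definition sdp_op (p q : sdp_car) : sdp_car :=
  exist _ (aphi A (fst (proj1_sig p)) (snd (proj1_sig p))
                  (fst (proj1_sig q)) (snd (proj1_sig q)),
           uop (snd (proj1_sig p)) (snd (proj1_sig q)))
        (sdp_op_closed p q).

Lemma sdp_zero_in : phi00 (fst (azero A, @uzero B)) (snd (azero A, @uzero B))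
                    = fst (azero A, @uzero B).
Proof. exact (ax1l A (azero A)). Qed.

Definition sdp_zero : sdp_car := exist _ (azero A, uzero) sdp_zero_in.

Lemma sdp_eq (p q : sdp_car) : proj1_sig p = proj1_sig q -> p = q.
Proof.
  destruct p as [p hp], q as [q hq]; simpl; intros E; subst q.
  f_equal. apply proof_irrelevance.
Qed.

Lemma sdp_op0r (p : sdp_car) : sdp_op p sdp_zero = p.
Proof.
  apply sdp_eq; destruct p as [[x b] hx]; simpl in *.
  rewrite (uop0r B b). unfold phi00 in hx. rewrite (ax2a A x b). rewrite hx. reflexivity.
Qed.

Lemma sdp_op0l (p : sdp_car) : sdp_op sdp_zero p = p.
Proof.
  apply sdp_eq; destruct p as [[x b] hx]; simpl in *.
  rewrite (uop0l B b). unfold phi00 in hx. 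
  rewrite <- (ax2b A x b). rewrite hx. reflexivity.
Qed.

Definition sdp : umagma := @UMagma sdp_car sdp_op sdp_zero sdp_op0r sdp_op0l.

Lemma sdp_inl_in (x : acar A) : phi00 (fst (x, @uzero B)) (snd (x, @uzero B)) = fst (x, @uzero B).
Proof. exact (ax1l A x). Qed.
Definition sdp_inl (x : acar A) : sdp := exist _ (x, uzero) (sdp_inl_in x).

Lemma sdp_inr_in (b : B) : phi00 (fst (azero A, b)) (snd (azero A, b)) = fst (azero A, b).
Proof. exact (ax3 A uzero b). Qed.
Definition sdp_inr (b : B) : sdp := exist _ (azero A, b) (sdp_inr_in b).

Definition sdp_fst (p : sdp) : acar A := fst (proj1_sig p).
Definition sdp_snd (p : sdp) : B := snd (proj1_sig p).

End Constructions.

(* Main.v *)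
Require Import Defs.

Theorem proposition4p2 (B : umagma) (A : action B) :
  (* (1) *)
  (forall (Z : umagma) (u : X_magma A -> Z) (v : B -> Z),
     is_morph u -> is_morph v ->
     (* at most one such morphism w *)
     (forall w1 w2 : sdp A -> Z,
        is_morph w1 -> is_morph w2 ->
        (forall x, w1 (sdp_inl A x) = u x) -> (forall b, w1 (sdp_inr A b) = v b) ->
        (forall x, w2 (sdp_inl A x) = u x) -> (forall b, w2 (sdp_inr A b) = v b) ->
        forall p, w1 p = w2 p) /\
     (* if it exists, w(x,b) = u(x) + v(b) *)
     (forall w : sdp A -> Z,
        is_morph w ->
        (forall x, w (sdp_inl A x) = u x) -> (forall b, w (sdp_inr A b) = v b) ->
        forall p, w p = uop (u (sdp_fst p)) (v (sdp_snd p))) /\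
     (* the map (x,b) |-> u(x) + v(b) is a morphism iff the compatibility identity *)
     (is_morph (fun p : sdp A => uop (u (sdp_fst p)) (v (sdp_snd p))) <->
      (forall p q : sdp A,
         uop (u (aphi A (sdp_fst p) (sdp_snd p) (sdp_fst q) (sdp_snd q)))
             (v (uop (sdp_snd p) (sdp_snd q)))
         = uop (uop (u (sdp_fst p)) (v (sdp_snd p)))
               (uop (u (sdp_fst q)) (v (sdp_snd q)))))) /\
  (* (2) *)
  (forall (Z : umagma) (f : Z -> X_magma A) (g : Z -> B),
     f uzero = azero A -> is_morph g ->
     ((exists H : forall z, phi00 A (f z) (g z) = f z,
         is_morph (fun z => (exist _ (f z, g z) (H z) : sdp A))) <->
      (forall z1 z2, f (uop z1 z2) = aphi A (f z1) (g z1) (f z2) (g z2)))).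
Proof.
  assert (dec : forall p : sdp A, p = sdp_op (sdp_inl A (sdp_fst p)) (sdp_inr A (sdp_snd p))).
  { intro p. apply sdp_eq. destruct p as [[x b] hx]; simpl.
    unfold sdp_fst, sdp_snd; simpl. rewrite (uop0l B b). unfold phi00 in hx; simpl in hx. rewrite hx. reflexivity. }
  split.
  - intros Z u v [u0 uo] [v0 vo].
    assert (K : forall w : sdp A -> Z, is_morph w ->
        (forall x, w (sdp_inl A x) = u x) -> (forall b, w (sdp_inr A b) = v b) ->
        forall p, w p = uop (u (sdp_fst p)) (v (sdp_snd p))).
    { intros w [w0 wo] wl wr p. transitivity (w (sdp_op (sdp_inl A (sdp_fst p)) (sdp_inr A (sdp_snd p)))); [f_equal; apply dec|].
      change (w (@uop (sdp A) (sdp_inl A (sdp_fst p)) (sdp_inr A (sdp_snd p))) =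
        uop (u (sdp_fst p)) (v (sdp_snd p))).
      rewrite wo, wl, wr. reflexivity. }
    split; [|split].
    + intros w1 w2 m1 m2 l1 r1 l2 r2 p. rewrite (K w1 m1 l1 r1 p), (K w2 m2 l2 r2 p). reflexivity.
    + exact K.
    + split.
      * intros [_ mo] p q. exact (mo p q).
      * intros Hc. split.
        -- change (uop (u (azero A)) (v uzero) = uzero).
           change (u (azero A) = uzero) in u0. rewrite u0, v0. apply uop0l.
        -- intros p q. exact (Hc p q).
  - intros Z f g f0 [g0 go]. split.
    + intros [H [_ mo]] z1 z2. pose proof (f_equal (fun p => sdp_fst p) (mo z1 z2)) as E.
      simpl in E. unfold sdp_fst in E. simpl in E. exact E.
    + intros Hf.
      assert (H : forall z, phi00 A (f z) (g z) = f z).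
      { intro z. unfold phi00. rewrite <- (ax2a A). pose proof (Hf z uzero) as E.
        rewrite (uop0r Z z) in E. rewrite f0, g0 in E. rewrite <- E. reflexivity. }
      exists H. split.
      * apply sdp_eq. simpl. change (f uzero) with (f uzero). rewrite f0, g0. reflexivity.
      * intros a b. apply sdp_eq. simpl. rewrite Hf, go. reflexivity.
Qed.
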